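(* Let $n\geq2$ and let $\gamma(t)=(x(t),r(t))$ be a solution of the system $$\dot x=\cos\theta,\qquad \dot r=\sin\theta,\qquad \dot\theta=\frac{x}{2}\sin\theta+\Big(\frac{n-1}{r}-\frac{r}{2}\Big)\cos\theta$$ in $\{r>0\}$. Then neither of the functions $x(t)$ and $r(t)-\sqrt{2(n-1)}$ has a positive local minimum or a negative local maximum; in particular, each of these functions has different signs at successive critical points.
   Context: Here $t$ is Euclidean arc length and $\theta$ is the angle between $\dot\gamma$ and the $x$-axis. *)

(* Defs.v *)
From Stdlib Require Import Reals.
From Coquelicot Require Import Coquelicot.
Open Scope R_scope.

(* t lies in the open interval (a, b), endpoints possibly infinite *)
Definition in_ival (a b : Rbar) (t : R) : Prop := Rbar_lt a t /\ Rbar_lt t b.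

Definition is_solution (n : nat) (a b : Rbar) (x r th : R -> R) : Prop :=
  forall t, in_ival a b t ->
    0 < r t /\
    is_derive x t (cos (th t)) /\
    is_derive r t (sin (th t)) /\
    is_derive th t (x t / 2 * sin (th t) + ((INR n - 1) / r t - r t / 2) * cos (th t)).

Definition is_local_min (a b : Rbar) (f : R -> R) (t : R) : Prop :=
  in_ival a b t /\
  exists eps : R, 0 < eps /\
    forall s, in_ival a b s -> Rabs (s - t) < eps -> f t <= f s.

Definition is_local_max (a b : Rbar) (f : R -> R) (t : R) : Prop :=
  in_ival a b t /\
  exists eps : R, 0 < eps /\
    forall s, in_ival a b s -> Rabs (s - t) < eps -> f s <= f t.

Definition no_pos_min_no_neg_max (a b : Rbar) (f : R -> R) : Prop :=
  (forall t, is_local_min a b f t -> f t <= 0) /\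
  (forall t, is_local_max a b f t -> 0 <= f t).

(* Main.v *)
Require Import Defs.
From Stdlib Require Import Reals Lra Psatz.
From Coquelicot Require Import Coquelicot.
Open Scope R_scope.

Lemma ival_nbhd a b t eps : in_ival a b t -> 0 < eps ->
  exists del, 0 < del /\ del <= eps /\ forall s, Rabs (s - t) < del -> in_ival a b s.
Proof.
  intros [Ha Hb] He.
  assert (HA : exists da, 0 < da /\ forall s, Rabs (s - t) < da -> Rbar_lt a s).
  { destruct a as [a0| |]; simpl in Ha.
    - exists (t - a0). split; [lra|]. intros s Hs. simpl.
      apply Rabs_def2 in Hs. lra.
    - contradiction.
    - exists 1. split; [lra|]. intros; simpl; auto. }
  assert (HB : exists db, 0 < db /\ forall s, Rabs (s - t) < db -> Rbar_lt s b).
  { destruct b as [b0| |]; simpl in Hb.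
    - exists (b0 - t). split; [lra|]. intros s Hs. simpl.
      apply Rabs_def2 in Hs. lra.
    - exists 1. split; [lra|]. intros; simpl; auto.
    - contradiction. }
  destruct HA as [da [Hda HA]]; destruct HB as [db [Hdb HB]].
  exists (Rmin eps (Rmin da db)). split; [|split].
  - repeat apply Rmin_pos; auto.
  - apply Rmin_l.
  - intros s Hs. split.
    + apply HA. eapply Rlt_le_trans; [apply Hs|].
      eapply Rle_trans; [apply Rmin_r|apply Rmin_l].
    + apply HB. eapply Rlt_le_trans; [apply Hs|].
      eapply Rle_trans; [apply Rmin_r|apply Rmin_r].
Qed.

Lemma fermat_min a b f g t :
  (forall s, in_ival a b s -> derivable_pt_lim f s (g s)) ->
  is_local_min a b f t -> g t = 0.
Proof.
  intros Hd [Ht [eps [He Hm]]].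
  destruct (ival_nbhd a b t eps Ht He) as [del [Hdel [Hle Hin]]].
  pose (pr := exist (fun l => derivable_pt_lim f t l) (g t) (Hd t Ht) : derivable_pt f t).
  change (derive_pt f t pr = 0).
  apply (deriv_minimum f (t - del) (t + del)); try lra.
  intros s H1 H2. apply Hm.
  - apply Hin. apply Rabs_def1; lra.
  - apply Rabs_def1; lra.
Qed.

Lemma no_min a b f g t d :
  (forall s, in_ival a b s -> derivable_pt_lim f s (g s)) ->
  g t = 0 -> derivable_pt_lim g t d -> d < 0 ->
  is_local_min a b f t -> False.
Proof.
  intros Hd Hg0 Hgd Hneg [Ht [eps [He Hm]]].
  destruct (Hgd (- d) ltac:(lra)) as [dl Hdl].
  destruct (ival_nbhd a b t (Rmin eps dl) Ht) as [del [Hdel [Hle Hin]]].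
  { apply Rmin_pos; [lra | apply cond_pos]. }
  assert (Hme : Rmin eps dl <= eps) by apply Rmin_l.
  assert (Hmd : Rmin eps dl <= dl) by apply Rmin_r.
  destruct (MVT_cor2 f g t (t + del / 2)) as [c [Hc1 Hc2]]; [lra| |].
  { intros c Hc. apply Hd, Hin. apply Rabs_def1; lra. }
  assert (Hgc : g c < 0).
  { assert (Hh : c - t <> 0) by lra.
    assert (Ha : Rabs (c - t) < dl) by (apply Rabs_def1; lra).
    specialize (Hdl (c - t) Hh Ha).
    replace (t + (c - t)) with c in Hdl by ring.
    rewrite Hg0, Rminus_0_r in Hdl.
    apply Rabs_def2 in Hdl. destruct Hdl as [Hdl _].
    assert (Hq : g c / (c - t) < 0) by lra.
    destruct (Rlt_or_le (g c) 0) as [|Hp]; auto.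
    exfalso. assert (0 <= g c / (c - t)).
    { unfold Rdiv. apply Rmult_le_pos; auto. left. apply Rinv_0_lt_compat. lra. }
    lra. }
  assert (f t <= f (t + del / 2)).
  { apply Hm; [apply Hin|]; apply Rabs_def1; lra. }
  assert (g c * (t + del / 2 - t) < 0).
  { apply Rmult_neg_pos; lra. }
  lra.
Qed.

Lemma loc_max_opp a b f t : is_local_max a b f t -> is_local_min a b (fun s => - f s) t.
Proof.
  intros [Ht [eps [He Hm]]]. split; auto. exists eps. split; auto.
  intros s H1 H2. specialize (Hm s H1 H2). lra.
Qed.

Lemma no_max a b f g t d :
  (forall s, in_ival a b s -> derivable_pt_lim f s (g s)) ->
  g t = 0 -> derivable_pt_lim g t d -> 0 < d ->
  is_local_max a b f t -> False.
Proof.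
  intros Hd Hg0 Hgd Hpos Hmax.
  apply (no_min a b (fun s => - f s) (fun s => - g s) t (- d)).
  - intros s Hs. apply derivable_pt_lim_opp. auto.
  - rewrite Hg0; ring.
  - apply derivable_pt_lim_opp. auto.
  - lra.
  - apply loc_max_opp; auto.
Qed.

Theorem lemma8 (n : nat) (a b : Rbar) (x r th : R -> R) :
  (2 <= n)%nat ->
  is_solution n a b x r th ->
  no_pos_min_no_neg_max a b x /\
  no_pos_min_no_neg_max a b (fun t => r t - sqrt (2 * (INR n - 1))).
Proof.
  intros Hn Hs.
  assert (Hn1 : 1 <= INR n - 1).
  { apply le_INR in Hn. simpl in Hn. lra. }
  set (c := sqrt (2 * (INR n - 1))).
  assert (Hc0 : 0 <= c) by apply sqrt_pos.
  assert (Hc2 : c * c = 2 * (INR n - 1)) by (apply sqrt_sqrt; lra).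
  assert (Dx : forall s, in_ival a b s -> derivable_pt_lim x s (cos (th s))).
  { intros s Hi. apply is_derive_Reals. apply Hs; auto. }
  assert (Dr : forall s, in_ival a b s ->
     derivable_pt_lim (fun t => r t - c) s (sin (th s))).
  { intros s Hi.
    replace (sin (th s)) with (sin (th s) - 0) by ring.
    apply (derivable_pt_lim_minus r (fun _ => c)).
    - apply is_derive_Reals. apply Hs; auto.
    - apply derivable_pt_lim_const. }
  assert (Dth : forall s, in_ival a b s -> derivable_pt_lim th s
     (x s / 2 * sin (th s) + ((INR n - 1) / r s - r s / 2) * cos (th s))).
  { intros s Hi. apply is_derive_Reals. apply Hs; auto. }
  assert (Dcos : forall s, in_ival a b s -> derivable_pt_lim (fun t => cos (th t)) s
     (- sin (th s) * (x s / 2 * sin (th s) + ((INR n - 1) / r s - r s / 2) * cos (th s)))).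
  { intros s Hi. exact (derivable_pt_lim_comp th cos s _ _ (Dth s Hi) (derivable_pt_lim_cos (th s))). }
  assert (Dsin : forall s, in_ival a b s -> derivable_pt_lim (fun t => sin (th t)) s
     (cos (th s) * (x s / 2 * sin (th s) + ((INR n - 1) / r s - r s / 2) * cos (th s)))).
  { intros s Hi. 
    exact (derivable_pt_lim_comp th sin s _ _ (Dth s Hi) (derivable_pt_lim_sin (th s))). }
  assert (Hsc := fun s => sin2_cos2 (th s)). unfold Rsqr in Hsc.
  split; split.
  - intros t Hm. destruct (Rle_or_lt (x t) 0) as [|Hp]; auto. exfalso.
    assert (Hg := fermat_min a b x _ t Dx Hm).
    refine (no_min a b x (fun s => cos (th s)) t _ Dx Hg (Dcos t (proj1 Hm)) _ Hm). cbv beta in Hg.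
    specialize (Hsc t). rewrite Hg in Hsc |- *. nra.
  - intros t Hm. destruct (Rle_or_lt 0 (x t)) as [|Hp]; auto. exfalso.
    assert (Hg : cos (th t) = 0).
    { assert (H := fermat_min a b (fun s => - x s) (fun s => - cos (th s)) t).
      enough (- cos (th t) = 0) by lra. apply H.
      - intros s Hi. apply derivable_pt_lim_opp; auto.
      - apply loc_max_opp; auto. }
    refine (no_max a b x (fun s => cos (th s)) t _ Dx Hg (Dcos t (proj1 Hm)) _ Hm). cbv beta in Hg.
    specialize (Hsc t). rewrite Hg in Hsc |- *. nra.
  - intros t Hm. destruct (Rle_or_lt (r t - c) 0) as [|Hp]; auto. exfalso.
    assert (Hg := fermat_min a b _ _ t Dr Hm).
    refine (no_min a b _ (fun s => sin (th s)) t _ Dr Hg (Dsin t (proj1 Hm)) _ Hm). cbv beta in Hg.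
    specialize (Hsc t). rewrite Hg in Hsc |- *.
    destruct (Hs t (proj1 Hm)) as [Hr _].
    assert (E : (INR n - 1) / r t - r t / 2 = (2 * (INR n - 1) - r t * r t) / (2 * r t))
      by (field; lra).
    assert (2 * (INR n - 1) - r t * r t < 0) by nra.
    assert ((2 * (INR n - 1) - r t * r t) / (2 * r t) < 0).
    { unfold Rdiv. apply Rmult_neg_pos; auto. apply Rinv_0_lt_compat; lra. }
    rewrite E. nra.
  - intros t Hm. destruct (Rle_or_lt 0 (r t - c)) as [|Hp]; auto. exfalso.
    assert (Hg : sin (th t) = 0).
    { assert (H := fermat_min a b (fun s => - (r s - c)) (fun s => - sin (th s)) t).
      enough (- sin (th t) = 0) by lra. apply H.
      - intros s Hi. apply derivable_pt_lim_opp; auto.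
      - apply loc_max_opp; auto. }
    refine (no_max a b _ (fun s => sin (th s)) t _ Dr Hg (Dsin t (proj1 Hm)) _ Hm). cbv beta in Hg.
    specialize (Hsc t). rewrite Hg in Hsc |- *.
    destruct (Hs t (proj1 Hm)) as [Hr _].
    assert (E : (INR n - 1) / r t - r t / 2 = (2 * (INR n - 1) - r t * r t) / (2 * r t))
      by (field; lra).
    assert (0 < 2 * (INR n - 1) - r t * r t) by nra.
    assert (0 < (2 * (INR n - 1) - r t * r t) / (2 * r t)).
    { unfold Rdiv. apply Rmult_lt_0_compat; auto. apply Rinv_0_lt_compat; lra. }
    rewrite E. nra.
Qed.
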